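(* Let $T(t,\tau)$ be an evolution family on a Banach space $X$ and $\|\cdot\|_t$ a family of norms satisfying $\|x\|\le\|x\|_t\le Ct^\epsilon\|x\|$ ($x\in X$, $t\ge1$) for some $C>0$, $\epsilon\ge0$, and $\|T(t,s)x\|_t\le M(t/s)^a\|x\|_s$ for all $t\ge s\ge1$, $x\in X$, with some $M,a>0$. Let $B:[1,\infty)\to B(X)$ be strongly continuous with $\|B(t)\|\le c/t^{1+\epsilon}$ for $t\ge1$, and let $U(t,\tau)$ be the evolution family satisfying $U(t,\tau)=T(t,\tau)+\int_\tau^tT(t,s)B(s)U(s,\tau)\,ds$ for $t\ge\tau\ge1$. Then $$\|U(t,\tau)x\|_t\le M(t/\tau)^{a+cCM}\|x\|_\tau\quad\text{for all } t\ge\tau\ge1,\ x\in X.$$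
   Context: Let $X$ be a Banach space with norm $\|\cdot\|$, $B(X)$ the bounded linear operators on $X$. An evolution family is a family of bounded linear operators $T(t,\tau)$ on $X$, $t\ge\tau\ge1$, such that $T(t,t)=\mathrm{Id}$ for $t\ge1$, $T(t,s)T(s,\tau)=T(t,\tau)$ for $t\ge s\ge\tau\ge1$, and for each $\tau\ge1$ and $x\in X$ the map $s\mapsto T(s,\tau)x$ is continuous on $[\tau,\infty)$. A family of norms $\|\cdot\|_t$ is also assumed to have $t\mapsto\|x\|_t$ measurable for each $x$. *)

(* Defs.v *)
From Stdlib Require Import Reals Lra.
Open Scope R_scope.

Record BanachSpace : Type := {
  bcar :> Type;
  bzero : bcar;
  badd : bcar -> bcar -> bcar;
  bopp : bcar -> bcar;
  bscal : R -> bcar -> bcar;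
  bnorm : bcar -> R;
  badd_assoc : forall x y z, badd x (badd y z) = badd (badd x y) z;
  badd_comm : forall x y, badd x y = badd y x;
  badd_0 : forall x, badd x bzero = x;
  badd_opp : forall x, badd x (bopp x) = bzero;
  bscal_1 : forall x, bscal 1 x = x;
  bscal_assoc : forall r s x, bscal r (bscal s x) = bscal (r * s) x;
  bscal_distr_l : forall r x y, bscal r (badd x y) = badd (bscal r x) (bscal r y);
  bscal_distr_r : forall r s x, bscal (r + s) x = badd (bscal r x) (bscal s x);
  bnorm_nonneg : forall x, 0 <= bnorm x;
  bnorm_eq0 : forall x, bnorm x = 0 -> x = bzero;
  bnorm_scal : forall r x, bnorm (bscal r x) = Rabs r * bnorm x;
  bnorm_triangle : forall x y, bnorm (badd x y) <= bnorm x + bnorm y;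
  bcomplete : forall u : nat -> bcar,
    (forall eps, eps > 0 -> exists N, forall m n, (m >= N)%nat -> (n >= N)%nat ->
        bnorm (badd (u m) (bopp (u n))) < eps) ->
    exists l, forall eps, eps > 0 -> exists N, forall n, (n >= N)%nat ->
        bnorm (badd (u n) (bopp l)) < eps
}.

Arguments bzero {_}. Arguments badd {_} _ _. Arguments bopp {_} _.
Arguments bscal {_} _ _. Arguments bnorm {_} _.

Definition bsub {X : BanachSpace} (x y : X) : X := badd x (bopp y).

Definition bounded_linear {X : BanachSpace} (A : X -> X) : Prop :=
  (forall x y, A (badd x y) = badd (A x) (A y)) /\
  (forall r x, A (bscal r x) = bscal r (A x)) /\
  (exists K, forall x, bnorm (A x) <= K * bnorm x).

Definition is_norm {X : BanachSpace} (nu : X -> R) : Prop :=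
  (forall x, 0 <= nu x) /\ (forall x, nu x = 0 -> x = bzero) /\
  (forall r x, nu (bscal r x) = Rabs r * nu x) /\
  (forall x y, nu (badd x y) <= nu x + nu y).

Definition continuous_on_from {X : BanachSpace} (a : R) (f : R -> X) : Prop :=
  forall s, a <= s -> forall eps, eps > 0 -> exists delta, delta > 0 /\
    forall s', a <= s' -> Rabs (s' - s) < delta -> bnorm (bsub (f s') (f s)) < eps.

(** Evolution family T(t,tau), t >= tau >= 1 (values for other arguments irrelevant). *)
Definition evolution_family {X : BanachSpace} (T : R -> R -> X -> X) : Prop :=
  (forall t tau, t >= tau -> tau >= 1 -> bounded_linear (T t tau)) /\
  (forall t x, t >= 1 -> T t t x = x) /\
  (forall t s tau x, t >= s -> s >= tau -> tau >= 1 -> T t s (T s tau x) = T t tau x) /\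
  (forall tau x, tau >= 1 -> continuous_on_from tau (fun s => T s tau x)).

(** Vector-valued integral on [a,b]: the gauge (Henstock-Kurzweil) integral,
    defined by Riemann sums over delta-fine tagged partitions.  Every Bochner
    integrable function is gauge integrable with the same integral. *)
Fixpoint vsum {X : BanachSpace} (f : nat -> X) (n : nat) : X :=
  match n with O => bzero | S k => badd (vsum f k) (f k) end.

Definition tagged_partition (a b : R) (n : nat) (p xi : nat -> R) : Prop :=
  p O = a /\ p n = b /\ forall i, (i < n)%nat -> p i <= xi i <= p (S i).

Definition fine (delta : R -> R) (n : nat) (p xi : nat -> R) : Prop :=
  forall i, (i < n)%nat -> xi i - p i < delta (xi i) /\ p (S i) - xi i < delta (xi i).

Definition riemann_sum {X : BanachSpace} (f : R -> X) (n : nat) (p xi : nat -> R) : X :=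
  vsum (fun i => bscal (p (S i) - p i) (f (xi i))) n.

Definition is_integral {X : BanachSpace} (f : R -> X) (a b : R) (v : X) : Prop :=
  forall eps, eps > 0 -> exists delta : R -> R, (forall s, delta s > 0) /\
    forall n p xi, tagged_partition a b n p xi -> fine delta n p xi ->
      bnorm (bsub (riemann_sum f n p xi) v) < eps.

(* Main.v *)
Require Import Defs.
From Stdlib Require Import Reals Lra Lia Classical.
Open Scope R_scope.

Section Alg.
Variable X : BanachSpace.

Lemma bscal0 (x : X) : bscal 0 x = bzero.
Proof. apply bnorm_eq0. rewrite bnorm_scal, Rabs_R0. ring. Qed.

Lemma bopp_scal (y : X) : bopp y = bscal (-1) y.
Proof.
  rewrite <- (badd_0 _ (bscal (-1) y)).
  rewrite <- (badd_opp _ y), badd_assoc.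
  replace (badd (bscal (-1) y) y) with (badd (bscal (-1) y) (bscal 1 y)) by (rewrite bscal_1; reflexivity).
  rewrite <- bscal_distr_r.
  replace (-1 + 1) with 0 by ring. rewrite bscal0.
  rewrite badd_comm, badd_0. reflexivity.
Qed.

Lemma bsub_sym (y z : X) : bsub z y = bscal (-1) (bsub y z).
Proof.
  unfold bsub. rewrite bscal_distr_l, <- !bopp_scal.
  rewrite (bopp_scal (bopp z)), (bopp_scal z), bscal_assoc.
  replace (-1 * -1) with 1 by ring. rewrite bscal_1. apply badd_comm.
Qed.

Lemma decomp (y z : X) : y = badd z (bsub y z).
Proof.
  unfold bsub. rewrite badd_assoc, (badd_comm _ z y), <- badd_assoc,
  badd_opp, badd_0. reflexivity.
Qed.

Lemma bnorm_sub_sym (y z : X) : bnorm (bsub z y) = bnorm (bsub y z).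
Proof. rewrite bsub_sym, bnorm_scal. replace (Rabs (-1)) with 1 by (rewrite Rabs_left; lra). ring. Qed.

Lemma bnorm_lip (y z : X) : Rabs (bnorm y - bnorm z) <= bnorm (bsub y z).
Proof.
  pose proof (bnorm_triangle _ z (bsub y z)) as H1. rewrite <- decomp in H1.
  pose proof (bnorm_triangle _ y (bsub z y)) as H2. rewrite <- decomp in H2.
  rewrite bnorm_sub_sym in H2. apply Rabs_le. lra.
Qed.

Lemma nrm_zero (nu : X -> R) : is_norm nu -> nu bzero = 0.
Proof.
  intros (H0 & H1 & H2 & H3). rewrite <- (bscal0 bzero), H2, Rabs_R0. ring.
Qed.
End Alg.

Fixpoint rsum (f : nat -> R) (n : nat) : R :=
  match n with O => 0 | S k => rsum f k + f k end.

Lemma nrm_vsum {X : BanachSpace} (nu : X -> R) (f : nat -> X) n :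
  is_norm nu -> nu (vsum f n) <= rsum (fun i => nu (f i)) n.
Proof.
  intros Hn. induction n; simpl.
  - rewrite nrm_zero; auto. lra.
  - destruct Hn as (_ & _ & _ & H3). specialize (H3 (vsum f n) (f n)). lra.
Qed.

Lemma rsum_le (f g : nat -> R) n : (forall i, (i < n)%nat -> f i <= g i) -> rsum f n <= rsum g n.
Proof.
  induction n; simpl; intros H. lra.
  assert (f n <= g n) by (apply H; lia).
  assert (rsum f n <= rsum g n) by (apply IHn; intros; apply H; lia). lra.
Qed.

Lemma rsum_scal (c : R) f n : rsum (fun i => c * f i) n = c * rsum f n.
Proof. induction n; simpl. ring. rewrite IHn. ring. Qed.

Lemma part_mono a b n p xi : tagged_partition a b n p xi ->
  forall i, (i <= n)%nat -> a <= p i <= b.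
Proof.
  intros (H0 & H1 & H2).
  assert (M : forall i j, (i <= j)%nat -> (j <= n)%nat -> p i <= p j).
  { intros i j Hij. induction Hij; intros. lra.
    assert (p i <= p m) by (apply IHHij; lia).
    specialize (H2 m ltac:(lia)). lra. }
  intros i Hi. split.
  - rewrite <- H0. apply M; lia.
  - rewrite <- H1. apply M; lia.
Qed.
Lemma cousin (a b : R) (delta : R -> R) : a <= b -> (forall s, delta s > 0) ->
  exists n p xi, tagged_partition a b n p xi /\ fine delta n p xi.
Proof.
  intros Hab Hd.
  set (E := fun y => a <= y <= b /\ exists n p xi, tagged_partition a y n p xi /\ fine delta n p xi).
  assert (Ea : E a).
  { split. lra. exists O, (fun _ => a), (fun _ => a). split.
    - split; [reflexivity|split;[reflexivity|intros; lia]].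
    - intros i Hi; lia. }
  assert (Eb : bound E) by (exists b; intros y [Hy _]; lra).
  destruct (completeness E Eb (ex_intro _ a Ea)) as [s [Hub Hlub]].
  assert (Has : a <= s) by (apply Hub; exact Ea).
  assert (Hsb : s <= b) by (apply Hlub; intros y [Hy _]; lra).
  assert (Hex : exists y, E y /\ y > s - delta s).
  { apply NNPP; intro Hn. assert (s <= s - delta s).
    { apply Hlub. intros y Hy. apply Rnot_lt_le. intro Hlt. apply Hn. exists y. split; auto. }
    specialize (Hd s). lra. }
  destruct Hex as [y [Ey Hys]].
  assert (Hyle : y <= s) by (apply Hub; exact Ey).
  destruct Ey as [Hy [n [p [xi [[Hp0 [Hpn Htag]] Hfine]]]]].
  set (z := Rmin b (s + delta s / 2)).
  assert (Hz1 : s <= z) by (unfold z; apply Rmin_glb; [lra| specialize (Hd s); lra]).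
  assert (Hz2 : z - s < delta s) by (unfold z; pose proof (Rmin_r b (s + delta s / 2)); specialize (Hd s); lra).
  set (p' := fun i => if Nat.leb i n then p i else z).
  set (xi' := fun i => if Nat.ltb i n then xi i else s).
  assert (Ez : E z).
  { split. split. lra. unfold z; apply Rmin_l.
    exists (S n), p', xi'. split; [split; [|split]|].
    - unfold p'. simpl. rewrite <- Hp0. reflexivity.
    - unfold p'. replace (Nat.leb (S n) n) with false by (symmetry; apply Nat.leb_gt; lia). reflexivity.
    - intros i Hi. unfold p', xi'.
      destruct (Nat.ltb i n) eqn:E1.
      + apply Nat.ltb_lt in E1.
        replace (Nat.leb i n) with true by (symmetry; apply Nat.leb_le; lia).
        replace (Nat.leb (S i) n) with true by (symmetry; apply Nat.leb_le; lia).
        apply Htag; auto.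
      + apply Nat.ltb_ge in E1. assert (i = n) by lia. subst i.
        replace (Nat.leb n n) with true by (symmetry; apply Nat.leb_le; lia).
        replace (Nat.leb (S n) n) with false by (symmetry; apply Nat.leb_gt; lia).
        rewrite Hpn. lra.
    - intros i Hi. unfold p', xi'.
      destruct (Nat.ltb i n) eqn:E1.
      + apply Nat.ltb_lt in E1.
        replace (Nat.leb i n) with true by (symmetry; apply Nat.leb_le; lia).
        replace (Nat.leb (S i) n) with true by (symmetry; apply Nat.leb_le; lia).
        apply Hfine; auto.
      + apply Nat.ltb_ge in E1. assert (i = n) by lia. subst i.
        replace (Nat.leb n n) with true by (symmetry; apply Nat.leb_le; lia).
        replace (Nat.leb (S n) n) with false by (symmetry; apply Nat.leb_gt; lia).
        rewrite Hpn. lra. }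
  assert (Hzs : z <= s) by (apply Hub; exact Ez).
  assert (Hzb : z = b).
  { unfold z in *. unfold Rmin in *. destruct (Rle_dec b (s + delta s / 2)); auto.
    specialize (Hd s). lra. }
  destruct Ez as [_ Hz]. rewrite Hzb in Hz. exact Hz.
Qed.
Lemma riemann_deriv (a b : R) (G G' : R -> R) : a <= b ->
 (forall c, a <= c <= b -> derivable_pt_lim G c (G' c)) ->
 (forall c, a <= c <= b -> continuity_pt G' c) ->
 forall eta, eta > 0 -> exists rho, rho > 0 /\ forall n p xi, tagged_partition a b n p xi ->
  (forall i, (i<n)%nat -> p (S i) - p i < rho) ->
  Rabs (rsum (fun i => (p (S i) - p i) * G' (xi i)) n - (G b - G a)) <= eta.
Proof.
  intros Hab HG HG' eta Heta.
  set (e' := eta / (b - a + 1)).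
  assert (He' : 0 < e') by (unfold e'; apply Rdiv_lt_0_compat; lra).
  destruct (Heine G' (fun c => a <= c <= b) (compact_P3 a b) HG' (mkposreal e' He')) as [[rho Hrho] Hu].
  simpl in Hu. exists rho. split; [lra|].
  intros n p xi Hpart Hmesh.
  pose proof (part_mono _ _ _ _ _ Hpart) as Hm.
  destruct Hpart as (Hp0 & Hpn & Htag).
  assert (Key : forall k, (k <= n)%nat ->
    Rabs (rsum (fun i => (p (S i) - p i) * G' (xi i)) k - (G (p k) - G a)) <= e' * (p k - a)).
  { induction k; intros Hk; simpl.
    - rewrite Hp0. replace (0 - (G a - G a)) with 0 by ring. rewrite Rabs_R0. lra.
    - specialize (IHk ltac:(lia)).
      pose proof (Htag k ltac:(lia)) as Ht. pose proof (Hm k ltac:(lia)) as Hk1.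
      pose proof (Hm (S k) Hk) as Hk2. pose proof (Hmesh k ltac:(lia)) as Hms.
      assert (Hterm : Rabs ((p (S k) - p k) * G' (xi k) - (G (p (S k)) - G (p k))) <= e' * (p (S k) - p k)).
      { destruct (Req_dec (p k) (p (S k))) as [Heq|Hne].
        - rewrite Heq. replace ((p (S k) - p (S k)) * G' (xi k) - (G (p (S k)) - G (p (S k)))) with 0 by ring.
          rewrite Rabs_R0. lra.
        - destruct (MVT_cor2 G G' (p k) (p (S k)) ltac:(lra)) as [zeta [Hz1 Hz2]].
          { intros c Hc. apply HG. lra. }
          rewrite Hz1.
          replace ((p (S k) - p k) * G' (xi k) - G' zeta * (p (S k) - p k)) with
            ((p (S k) - p k) * (G' (xi k) - G' zeta)) by ring.
          rewrite Rabs_mult, (Rabs_right (p (S k) - p k)) by lra.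
          rewrite Rmult_comm. apply Rmult_le_compat_r; [lra|].
          left. apply Hu; try lra. apply Rabs_def1; lra. }
      replace (rsum (fun i => (p (S i) - p i) * G' (xi i)) k + (p (S k) - p k) * G' (xi k) - (G (p (S k)) - G a))
        with ((rsum (fun i => (p (S i) - p i) * G' (xi i)) k - (G (p k) - G a)) +
              ((p (S k) - p k) * G' (xi k) - (G (p (S k)) - G (p k)))) by ring.
      eapply Rle_trans; [apply Rabs_triang|]. nra. }
  specialize (Key n (le_n n)). rewrite Hpn in Key.
  eapply Rle_trans; [exact Key|].
  unfold e'. apply (Rmult_le_reg_r (b - a + 1)); [lra|].
  field_simplify; [|lra]. nra.
Qed.
From Coquelicot Require Coquelicot.
Module AuxD.
Import Coquelicot.Coquelicot.
Lemma Fderiv (A L tau u : R) : 0 < u ->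
  derivable_pt_lim (fun v => A * exp (L * (ln v - ln tau))) u (L * (A * exp (L * (ln u - ln tau))) / u).
Proof.
  intros Hu. apply is_derive_Reals.
  auto_derive. lra. unfold Rminus. field. lra.
Qed.
Lemma Gderiv (A L tau u : R) : 0 < u ->
  derivable_pt_lim (fun v => L * (A * exp (L * (ln v - ln tau))) / v) u
    (L * (A * exp (L * (ln u - ln tau))) * (L - 1) / (u * u)).
Proof.
  intros Hu. apply is_derive_Reals.
  auto_derive. lra. unfold Rminus. field. lra.
Qed.
End AuxD.

Lemma Fcont (A L tau u : R) : 0 < u -> continuity_pt (fun v => A * exp (L * (ln v - ln tau))) u.
Proof. intros Hu. apply derivable_continuous_pt. exists (L * (A * exp (L * (ln u - ln tau))) / u). apply AuxD.Fderiv; auto. Qed.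
Lemma Gcont (A L tau u : R) : 0 < u -> continuity_pt (fun v => L * (A * exp (L * (ln v - ln tau))) / v) u.
Proof. intros Hu. apply derivable_continuous_pt. eexists. apply AuxD.Gderiv; auto. Qed.

Lemma cont_ed (f : R -> R) s : continuity_pt f s ->
  forall e, e > 0 -> exists d, d > 0 /\ forall u, Rabs (u - s) < d -> Rabs (f u - f s) < e.
Proof.
  intros Hc e He. destruct (Hc e He) as [d [Hd H]]. exists d. split; auto.
  intros u Hu. destruct (Req_dec u s) as [->|Hne].
  - unfold Rminus. rewrite Rplus_opp_r, Rabs_R0. auto.
  - apply (H u). split. split; [exact I| auto]. simpl. unfold R_dist. auto.
Qed.
Lemma gronwall (tau K L : R) (h g : R -> R) :
 tau > 0 -> L >= 0 ->
 (forall s, s >= tau -> continuity_pt h s) ->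
 (forall s, s >= tau -> h s <= g s) ->
 (forall t, t >= tau -> forall eta, eta > 0 -> exists delta : R -> R, (forall s, delta s > 0) /\
    forall n p xi, tagged_partition tau t n p xi -> fine delta n p xi ->
      g t <= K + rsum (fun i => (p (S i) - p i) * (L * h (xi i) / xi i)) n + eta) ->
 forall t, t >= tau -> g t <= K * exp (L * (ln t - ln tau)).
Proof.
  intros Htau HL Hh Hhg HH.
  assert (Main : forall eta, eta > 0 -> forall T, T >= tau ->
     g T <= (K + eta) * exp (L * (ln T - ln tau)) - eta / 2).
  { intros eta Heta.
    set (F := fun v => (K + eta) * exp (L * (ln v - ln tau))).
    assert (Ftau : F tau = K + eta) by (unfold F; rewrite Rminus_diag, Rmult_0_r, exp_0; ring).
    assert (Core : forall s, s >= tau -> (forall u, tau <= u <= s -> h u <= F u) -> g s <= F s - eta / 2).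
    { intros s Hs Hle.
      destruct (riemann_deriv tau s F (fun v => L * F v / v) ltac:(lra)) with (eta := eta / 4)
        as [rho [Hrho HR]].
      { intros c Hc. unfold F. apply AuxD.Fderiv. lra. }
      { intros c Hc. unfold F. apply Gcont. lra. }
      { lra. }
      destruct (HH s Hs (eta / 4) ltac:(lra)) as [delta [Hdp Hd]].
      destruct (cousin tau s (fun u => Rmin (delta u) (rho / 2)) ltac:(lra)) as [n [p [xi [Hpart Hfine]]]].
      { intros u. apply Rmin_glb_lt; [apply Hdp|lra]. }
      assert (Hf : fine delta n p xi).
      { intros i Hi. destruct (Hfine i Hi) as [H1 H2]. pose proof (Rmin_l (delta (xi i)) (rho/2)). split; lra. }
      assert (Hmesh : forall i, (i < n)%nat -> p (S i) - p i < rho).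
      { intros i Hi. destruct (Hfine i Hi) as [H1 H2]. pose proof (Rmin_r (delta (xi i)) (rho/2)). lra. }
      specialize (Hd n p xi Hpart Hf). specialize (HR n p xi Hpart Hmesh).
      pose proof (part_mono _ _ _ _ _ Hpart) as Hm.
      assert (Hmon : rsum (fun i => (p (S i) - p i) * (L * h (xi i) / xi i)) n <=
                     rsum (fun i => (p (S i) - p i) * (L * F (xi i) / xi i)) n).
      { apply rsum_le. intros i Hi. destruct Hpart as (_ & _ & Ht). pose proof (Ht i Hi).
        pose proof (Hm i ltac:(lia)). pose proof (Hm (S i) ltac:(lia)).
        apply Rmult_le_compat_l; [lra|]. unfold Rdiv. apply Rmult_le_compat_r.
        { left. apply Rinv_0_lt_compat. lra. }
        apply Rmult_le_compat_l; [lra|]. apply Hle. lra. }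
      rewrite Ftau in HR. unfold Rabs in HR. destruct (Rcase_abs _) in HR; lra. }
    assert (Base : h tau <= F tau).
    { destruct (HH tau ltac:(lra) (eta / 2) ltac:(lra)) as [delta [_ Hd]].
      specialize (Hd O (fun _ => tau) (fun _ => tau)).
      assert (g tau <= K + 0 + eta / 2).
      { apply Hd. split; [reflexivity|split;[reflexivity|intros; lia]]. intros i Hi; lia. }
      pose proof (Hhg tau ltac:(lra)). lra. }
    intros T HT.
    set (E := fun s => tau <= s <= T /\ forall u, tau <= u <= s -> h u <= F u).
    assert (Etau : E tau).
    { split. lra. intros u Hu. replace u with tau by lra. exact Base. }
    assert (Eb : bound E) by (exists T; intros y [Hy _]; lra).
    destruct (completeness E Eb (ex_intro _ tau Etau)) as [s [Hub Hlub]].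
    assert (Hs1 : tau <= s) by (apply Hub; exact Etau).
    assert (Hs2 : s <= T) by (apply Hlub; intros y [Hy _]; lra).
    assert (Hcd : continuity_pt (fun v => h v - F v) s).
    { apply (continuity_pt_minus h F s). apply Hh; lra. unfold F; apply Fcont; lra. }
    pose proof (cont_ed _ _ Hcd) as Hed.
    assert (ClA : forall u, tau <= u < s -> h u <= F u).
    { intros u Hu. apply NNPP. intro Hn.
      assert (s <= u).
      { apply Hlub. intros y Ey. apply Rnot_lt_le. intro Hlt. apply Hn.
        destruct Ey as [_ Ey]. apply Ey. lra. }
      lra. }
    assert (ClB : h s <= F s).
    { destruct (Req_dec s tau) as [->|Hne]; [exact Base|].
      apply Rnot_lt_le. intro Hlt.
      destruct (Hed (h s - F s) ltac:(lra)) as [d [Hd Hdd]].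
      set (u := Rmax tau (s - d / 2)).
      assert (Hu1 : tau <= u) by apply Rmax_l.
      assert (Hu2 : u < s) by (unfold u; apply Rmax_lub_lt; lra).
      assert (Hu3 : s - d / 2 <= u) by apply Rmax_r.
      specialize (Hdd u ltac:(apply Rabs_def1; lra)).
      apply Rabs_def2 in Hdd. specialize (ClA u ltac:(lra)). lra. }
    assert (Es : E s).
    { split. lra. intros u Hu. destruct (Req_dec u s) as [->|Hne]; auto. apply ClA. lra. }
    assert (Hcore : g s <= F s - eta / 2) by (apply Core; [lra| apply Es]).
    assert (HsT : s = T).
    { destruct (Req_dec s T) as [|Hne]; auto. exfalso.
      pose proof (Hhg s ltac:(lra)).
      destruct (Hed (eta / 2) ltac:(lra)) as [d [Hd Hdd]].
      set (s' := Rmin T (s + d / 2)).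
      assert (Hs'1 : s < s') by (unfold s'; apply Rmin_glb_lt; lra).
      assert (Hs'2 : s' <= s + d / 2) by apply Rmin_r.
      assert (Es' : E s').
      { split. split. lra. apply Rmin_l.
        intros u Hu. destruct (Rle_dec u s) as [Hus|Hus].
        - apply Es. lra.
        - specialize (Hdd u ltac:(apply Rabs_def1; lra)). apply Rabs_def2 in Hdd. lra. }
      specialize (Hub s' Es'). lra. }
    rewrite HsT in Hcore. exact Hcore. }
  intros t Ht.
  assert (Hex : exp (L * (ln t - ln tau)) > 0) by apply exp_pos.
  apply Rnot_lt_le. intro Hlt.
  set (eta := (g t - K * exp (L * (ln t - ln tau))) / (2 * exp (L * (ln t - ln tau)))).
  assert (Heta : eta > 0) by (unfold eta; apply Rdiv_lt_0_compat; lra).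
  specialize (Main eta Heta t Ht).
  assert (eta * exp (L * (ln t - ln tau)) = (g t - K * exp (L * (ln t - ln tau))) / 2)
    by (unfold eta; field; lra).
  lra.
Qed.
Module AuxE.
Import Coquelicot.Coquelicot.
Lemma Ederiv (k u : R) : 0 < u ->
  derivable_pt_lim (fun v => exp (k * ln v)) u (exp (k * ln u) * (k / u)).
Proof. intros Hu. apply is_derive_Reals. auto_derive. lra. field. lra. Qed.
End AuxE.

Lemma Econt (k u : R) : 0 < u -> continuity_pt (fun v => exp (k * ln v)) u.
Proof. intros Hu. apply derivable_continuous_pt. eexists. apply AuxE.Ederiv; auto. Qed.

Lemma ed_cont (f : R -> R) s :
  (forall e, e > 0 -> exists d, d > 0 /\ forall u, Rabs (u - s) < d -> Rabs (f u - f s) < e) ->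
  continuity_pt f s.
Proof.
  intros H e He. destruct (H e He) as [d [Hd Hu]]. exists d. split; auto.
  intros u [_ Hu2]. apply Hu. exact Hu2.
Qed.

Lemma expdiv u v : exp u / exp v = exp (u - v).
Proof. unfold Rminus. rewrite exp_plus, exp_Ropp. reflexivity. Qed.

Lemma ln_div' t s : 0 < t -> 0 < s -> ln (t / s) = ln t - ln s.
Proof. intros. unfold Rdiv. rewrite ln_mult, ln_Rinv; try ring; auto. apply Rinv_0_lt_compat; auto. Qed.

Lemma ident1 (t xi a eps : R) : 0 < t -> 0 < xi ->
  Rpower (t / xi) a * (Rpower xi eps / Rpower xi (1 + eps)) * exp (- a * ln t) = exp (- a * ln xi) / xi.
Proof.
  intros Ht Hx. unfold Rpower. rewrite ln_div' by auto. rewrite expdiv.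
  replace (exp (- a * ln xi) / xi) with (exp (- a * ln xi) / exp (ln xi)) by (rewrite exp_ln; auto).
  rewrite expdiv, <- !exp_plus. f_equal. ring.
Qed.

Lemma ident2 (t tau a : R) : 0 < t -> 0 < tau ->
  Rpower (t / tau) a * exp (- a * ln t) = exp (- a * ln tau).
Proof.
  intros Ht Hx. unfold Rpower. rewrite ln_div' by auto. rewrite <- !exp_plus. f_equal. ring.
Qed.
Theorem mainTheorem15 (X : BanachSpace) (T U : R -> R -> X -> X) (nrm : R -> X -> R)
  (B : R -> X -> X) (C eps M a c : R) :
  evolution_family T ->
  (forall t, t >= 1 -> is_norm (nrm t)) ->
  C > 0 -> eps >= 0 ->
  (forall t x, t >= 1 -> bnorm x <= nrm t x /\ nrm t x <= C * Rpower t eps * bnorm x) ->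
  M > 0 -> a > 0 ->
  (forall t s x, t >= s -> s >= 1 -> nrm t (T t s x) <= M * Rpower (t / s) a * nrm s x) ->
  (forall t, t >= 1 -> bounded_linear (B t)) ->
  (forall x, continuous_on_from 1 (fun t => B t x)) ->
  (forall t x, t >= 1 -> bnorm (B t x) <= c / Rpower t (1 + eps) * bnorm x) ->
  evolution_family U ->
  (forall t tau x, t >= tau -> tau >= 1 ->
     is_integral (fun s => T t s (B s (U s tau x))) tau t (bsub (U t tau x) (T t tau x))) ->
  forall t tau x, t >= tau -> tau >= 1 ->
    nrm t (U t tau x) <= M * Rpower (t / tau) (a + c * C * M) * nrm tau x.
Proof.
  intros HT Hnorm HC Heps Hnn HM Ha HTb HBl HBc HB HU Hint t tau x Ht Htau.
  destruct (Rlt_or_le c 0) as [Hc|Hc].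
  {
    assert (Triv : forall y : X, y = bzero).
    { intros y. apply bnorm_eq0. specialize (HB 1 y ltac:(lra)).
      unfold Rpower in HB. rewrite ln_1, Rmult_0_r, exp_0 in HB.
      pose proof (bnorm_nonneg _ (B 1 y)). pose proof (bnorm_nonneg _ y).
      unfold Rdiv in HB. rewrite Rinv_1 in HB. nra. }
    rewrite (Triv (U t tau x)), (Triv x), !nrm_zero; try (apply Hnorm; lra). lra. }
  set (L := c * C * M).
  assert (HL : L >= 0) by (unfold L; apply Rle_ge; apply Rmult_le_pos; [apply Rmult_le_pos|]; lra).
  set (h := fun s => bnorm (U (Rmax s tau) tau x) * exp (- a * ln s)).
  set (g := fun s => nrm s (U s tau x) * exp (- a * ln s)).
  set (K := M * exp (- a * ln tau) * nrm tau x).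
  destruct HU as (HUl & HU1 & HU2 & HUc).
  assert (Hhcont : forall s, s >= tau -> continuity_pt h s).
  { intros s Hs. unfold h.
    apply (continuity_pt_mult (fun s => bnorm (U (Rmax s tau) tau x)) (fun s => exp (- a * ln s))).
    - apply ed_cont. intros e He.
      destruct (HUc tau x Htau s ltac:(lra) e He) as [d [Hd Hdd]].
      exists d. split; auto. intros u Hu.
      rewrite (Rmax_left s tau) by lra.
      eapply Rle_lt_trans; [apply bnorm_lip|]. apply Hdd. apply Rmax_r.
      unfold Rmax. destruct (Rle_dec u tau).
      + apply Rabs_def2 in Hu. apply Rabs_def1; lra.
      + exact Hu.
    - apply Econt. lra. }
  assert (Hhg : forall s, s >= tau -> h s <= g s).
  { intros s Hs. unfold h, g. rewrite Rmax_left by lra.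
    apply Rmult_le_compat_r. left; apply exp_pos. apply Hnn. lra. }
  assert (HH : forall t, t >= tau -> forall eta, eta > 0 -> exists delta : R -> R, (forall s, delta s > 0) /\
    forall n p xi, tagged_partition tau t n p xi -> fine delta n p xi ->
      g t <= K + rsum (fun i => (p (S i) - p i) * (L * h (xi i) / xi i)) n + eta).
  { clear t Ht. intros t Ht eta Heta.
    set (et := exp (- a * ln t)).
    assert (Het : et > 0) by apply exp_pos.
    assert (HRp : Rpower t eps > 0) by apply exp_pos.
    set (W := C * Rpower t eps * et).
    assert (HW : W > 0) by (unfold W; apply Rmult_lt_0_compat; [apply Rmult_lt_0_compat|]; lra).
    destruct (Hint t tau x Ht Htau (eta / W) ltac:(apply Rdiv_lt_0_compat; lra)) as [delta [Hdp Hd]].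
    exists delta. split; auto. intros n p xi Hpart Hfine.
    specialize (Hd n p xi Hpart Hfine).
    pose proof (part_mono _ _ _ _ _ Hpart) as Hm.
    set (v := bsub (U t tau x) (T t tau x)) in *.
    set (Rs := riemann_sum (fun s => T t s (B s (U s tau x))) n p xi) in *.
    assert (Hnt : is_norm (nrm t)) by (apply Hnorm; lra).
    assert (Htri : forall y z, nrm t (badd y z) <= nrm t y + nrm t z) by (apply Hnt).
    assert (S1 : nrm t (U t tau x) <= nrm t (T t tau x) + nrm t v).
    { unfold v. rewrite (decomp _ (U t tau x) (T t tau x)) at 1. apply Htri. }
    assert (S2 : nrm t v <= nrm t Rs + nrm t (bsub v Rs)).
    { rewrite (decomp _ v Rs) at 1. apply Htri. }
    assert (S3 : nrm t (bsub v Rs) <= C * Rpower t eps * (eta / W)).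
    { eapply Rle_trans; [apply Hnn; lra|]. rewrite bnorm_sub_sym.
      apply Rmult_le_compat_l; [left; apply Rmult_lt_0_compat; lra|]. left; exact Hd. }
    assert (S4 : nrm t Rs <= rsum (fun i => (p (S i) - p i) * nrm t (T t (xi i) (B (xi i) (U (xi i) tau x)))) n).
    { unfold Rs, riemann_sum. eapply Rle_trans; [apply nrm_vsum; exact Hnt|].
      apply rsum_le. intros i Hi. destruct Hnt as (_ & _ & Hs & _). rewrite Hs.
      destruct Hpart as (_ & _ & Htg). specialize (Htg i Hi).
      rewrite Rabs_right by lra. lra. }
    assert (S5 : forall i, (i < n)%nat ->
      (p (S i) - p i) * nrm t (T t (xi i) (B (xi i) (U (xi i) tau x))) * et <=
      (p (S i) - p i) * (L * h (xi i) / xi i)).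
    { intros i Hi. destruct Hpart as (_ & _ & Htg). specialize (Htg i Hi).
      pose proof (Hm i ltac:(lia)). pose proof (Hm (S i) ltac:(lia)).
      set (s := xi i) in *. rewrite Rmult_assoc. apply Rmult_le_compat_l; [lra|].
      set (y := B s (U s tau x)).
      set (ph := bnorm (U s tau x)).
      assert (A1 : nrm t (T t s y) <= M * Rpower (t / s) a * nrm s y) by (apply HTb; lra).
      assert (A2 : nrm s y <= C * Rpower s eps * bnorm y) by (apply Hnn; lra).
      assert (A3 : bnorm y <= c / Rpower s (1 + eps) * ph) by (apply HB; lra).
      assert (Hp1 : Rpower (t / s) a > 0) by apply exp_pos.
      assert (Hp2 : Rpower s eps > 0) by apply exp_pos.
      assert (Hp3 : Rpower s (1 + eps) > 0) by apply exp_pos.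
      assert (A4 : nrm t (T t s y) <= M * Rpower (t / s) a * (C * Rpower s eps * (c / Rpower s (1 + eps) * ph))).
      { eapply Rle_trans; [exact A1|]. apply Rmult_le_compat_l; [left; apply Rmult_lt_0_compat; lra|].
        eapply Rle_trans; [exact A2|]. apply Rmult_le_compat_l; [left; apply Rmult_lt_0_compat; lra|]. exact A3. }
      pose proof (ident1 t s a eps ltac:(lra) ltac:(lra)) as Id.
      assert (Eh : h s = ph * exp (- a * ln s)) by (unfold h, ph; rewrite Rmax_left by lra; reflexivity).
      rewrite Eh. fold et in Id.
      apply Rle_trans with (M * Rpower (t / s) a * (C * Rpower s eps * (c / Rpower s (1 + eps) * ph)) * et).
      { apply Rmult_le_compat_r; lra. }
      unfold L. replace (c * C * M * (ph * exp (- a * ln s)) / s) with (c * C * M * ph * (exp (- a * ln s) / s)) by (field; lra).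
      rewrite <- Id. right. field. lra. }
    assert (S6 : nrm t (T t tau x) * et <= K).
    { unfold K. rewrite <- (ident2 t tau a) by lra. fold et.
      assert (nrm t (T t tau x) <= M * Rpower (t / tau) a * nrm tau x) by (apply HTb; lra).
      apply Rle_trans with (M * Rpower (t / tau) a * nrm tau x * et). apply Rmult_le_compat_r; lra.
      right. ring. }
    assert (S7 : rsum (fun i => (p (S i) - p i) * nrm t (T t (xi i) (B (xi i) (U (xi i) tau x)))) n * et <=
                 rsum (fun i => (p (S i) - p i) * (L * h (xi i) / xi i)) n).
    { rewrite Rmult_comm, <- rsum_scal. apply rsum_le. intros i Hi. rewrite Rmult_comm. apply S5; auto. }
    assert (S8 : C * Rpower t eps * (eta / W) * et = eta) by (unfold W; field; lra).
    unfold g. fold et.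
    apply Rle_trans with ((nrm t (T t tau x) + (rsum (fun i => (p (S i) - p i) * nrm t (T t (xi i) (B (xi i) (U (xi i) tau x)))) n + C * Rpower t eps * (eta / W))) * et).
    { apply Rmult_le_compat_r; lra. }
    lra. }
  pose proof (gronwall tau K L h g ltac:(lra) HL Hhcont Hhg HH t Ht) as Gr.
  unfold g, K in Gr.
  assert (Eq : M * Rpower (t / tau) (a + L) * nrm tau x =
    (M * exp (- a * ln tau) * nrm tau x * exp (L * (ln t - ln tau))) * exp (a * ln t)).
  { unfold Rpower, L. rewrite ln_div' by lra.
    replace (M * exp (- a * ln tau) * nrm tau x * exp (c * C * M * (ln t - ln tau)) * exp (a * ln t))
      with (M * nrm tau x * (exp (- a * ln tau) * exp (c * C * M * (ln t - ln tau)) * exp (a * ln t))) by ring.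
    rewrite <- !exp_plus. replace ((a + c * C * M) * (ln t - ln tau)) with (- a * ln tau + c * C * M * (ln t - ln tau) + a * ln t) by ring.
    ring. }
  rewrite Eq.
  assert (E1 : exp (- a * ln t) * exp (a * ln t) = 1).
  { rewrite <- exp_plus. replace (- a * ln t + a * ln t) with 0 by ring. apply exp_0. }
  assert (Hpos : exp (a * ln t) > 0) by apply exp_pos.
  replace (nrm t (U t tau x)) with (nrm t (U t tau x) * exp (- a * ln t) * exp (a * ln t))
    by (rewrite Rmult_assoc, E1; ring).
  apply Rmult_le_compat_r; lra.
Qed.
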